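(* Let $(S,|\cdot|)$ be a finite metric space with $n$ points, $t\ge1$, $G'=(S,E')$ a $t$-spanner for $S$, $f$ an integer with $1\le f\le (n-1)/2$, and $G=(S,E)$ the graph obtained from $G'$ by the construction in the context. Let $F\subseteq E$ be such that $(S,F)$ has maximum degree at most $f$. Let $p,q$ be distinct points of $S$ and let $P'$ be a shortest path between $p$ and $q$ in $G'$. If $P'$ has at least $2f+2$ vertices, then $\delta_{G\setminus F}(p,q)\le (8f+2)\,|P'|$, where $|P'|$ is the length of $P'$.
   Context: All graphs on $S$ have edge weights $|pq|$; the length of a path is the sum of its edge weights and $\delta_X(p,q)$ is the shortest-path distance in $X$. A graph $G'=(S,E')$ is a $t$-spanner for $S$ if $\delta_{G'}(p,q)\le t|pq|$ for all $p,q$. $G\setminus F$ is the graph with vertex set $S$ and edge set $E\setminus F$. Construction: for each edge $\{a,b\}\in E'$, list the points of $S\setminus\{a,b\}$ as $c_1,\dots,c_{n-2}$ in non-decreasing order of $|ac_i|+|c_ib|$ (ties broken arbitrarily) and let $C_{ab}=\{c_1,\dots,c_{2f-1}\}$. The graph $G=(S,E)$ has edge set $E=E'\cup\{\{a,c\},\{c,b\}:\{a,b\}\in E',\ c\in C_{ab}\}$. *)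

(* Defs.v *)
From mathcomp Require Import all_boot all_order all_algebra.
Set Implicit Arguments. Unset Strict Implicit. Unset Printing Implicit Defensive.
Import Order.TTheory GRing.Theory Num.Theory.
Local Open Scope ring_scope.

Section Defs.
Variables (R : realFieldType) (S : finType).

Definition is_metric (d : S -> S -> R) : Prop :=
  (forall x y, d x y = 0 <-> x = y) /\
  (forall x y, d x y = d y x) /\
  (forall x y z, d x z <= d x y + d y z).

Definition is_edge_set (E : {set {set S}}) : Prop :=
  forall e, e \in E -> #|e| = 2%N.

Definition is_walk (E : {set {set S}}) (p : S) (s : seq S) : bool :=
  path (fun x y => [set x; y] \in E) p s.

Definition plen (d : S -> S -> R) (p : S) (s : seq S) : R :=
  \sum_(w <- pairmap d p s) w.

Definition is_spanner (d : S -> S -> R) (E' : {set {set S}}) (t : R) : Prop :=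
  forall p q, exists s, [/\ is_walk E' p s, last p s = q & plen d p s <= t * d p q].

Definition is_shortest_path (d : S -> S -> R) (E : {set {set S}}) (p q : S)
    (s : seq S) : Prop :=
  [/\ is_walk E p s, last p s = q &
      forall s', is_walk E p s' -> last p s' = q -> plen d p s <= plen d p s'].

(* ord e is a listing c_1,...,c_{n-2} of S \ {a,b} (e = {a,b}) in
   non-decreasing order of |ac| + |cb|, ties broken arbitrarily. *)
Definition valid_order (d : S -> S -> R) (e : {set S}) (o : seq S) : Prop :=
  forall a b, a != b -> e = [set a; b] ->
    perm_eq o (enum (~: e)) /\
    sorted (fun x y => d a x + d x b <= d a y + d y b) o.

Definition Cset (ord : {set S} -> seq S) (f : nat) (e : {set S}) : seq S :=
  take (2 * f - 1) (ord e).

Definition construct (ord : {set S} -> seq S) (f : nat) (E' : {set {set S}})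
    : {set {set S}} :=
  E' :|: \bigcup_(e in E') [set [set x; c] | x in e, c in Cset ord f e].

Definition max_deg_le (F : {set {set S}}) (f : nat) : Prop :=
  forall v : S, (#|[set e in F | v \in e]| <= f)%N.

End Defs.

(* Main.v *)
Require Import Defs.
From mathcomp Require Import all_boot all_order all_algebra.
From mathcomp Require Import zify lra.
Import Order.TTheory GRing.Theory Num.Theory.
Lemma win_idx i m f k : (i < k) ->
  (m \in iota (i - 2*f) (i - (i - 2*f)) ++ iota i.+2 (minn k (i+1+2*f) - i.+1)) ->
  [/\ (i <= m + 2*f), (m <= i + 2*f + 1), (m <= k), m != i & m != i.+1].
Proof.
move=> hi; rewrite mem_cat !mem_iota => /orP [] /andP [h1 h2]; split; lia.
Qed.
Lemma win_size i f k : (i < k) -> (2 * f + 1 <= k) ->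
  (2 * f - 1 <= (i - (i - 2*f)) + (minn k (i+1+2*f) - i.+1)).
Proof. move=> *; lia. Qed.
Lemma win_disj i f k : ~~ has (mem (iota (i - 2*f) (i - (i - 2*f))))
    (iota i.+2 (minn k (i+1+2*f) - i.+1)).
Proof. apply/hasPn => x; rewrite /= !mem_iota => /andP [h1 h2]; apply/negP => /andP [h3 h4]; lia. Qed.

Lemma ar1 u f x : 2 + u = x -> 2*f+1 <= x -> 2*f-1 <= u.
Proof. move=> <-; lia. Qed.
Lemma ar2 c b1 b2 f : c = 2*f-1 -> 1 <= f -> b1 <= f-1 -> b2 <= f-1 -> 0 < c - (b1 + b2).
Proof. lia. Qed.

Local Open Scope ring_scope.

Section H.
Context {R : realFieldType} {S : finType} {d : S -> S -> R}.
Hypothesis dm : is_metric d.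

Lemma d0 x : d x x = 0.
Proof. by case: dm => [H _]; apply/H. Qed.
Lemma dsym x y : d x y = d y x.
Proof. by case: dm => [_ [H _]]. Qed.
Lemma dtri x y z : d x z <= d x y + d y z.
Proof. by case: dm => [_ [_ H]]. Qed.
Lemma dge0 x y : 0 <= d x y.
Proof. have := dtri x y x; rewrite d0 (dsym y x) => h; lra. Qed.
Lemma dpos x y : x != y -> 0 < d x y.
Proof.
move=> nxy; rewrite lt_def dge0 andbT; apply/eqP => h.
case: dm => [H _]; move/H: h => h; by rewrite h eqxx in nxy.
Qed.

Lemma plen_nil p : plen d p [::] = 0.
Proof. by rewrite /plen big_nil. Qed.
Lemma plen_cons p x s : plen d p (x :: s) = d p x + plen d x s.
Proof. by rewrite /plen /= big_cons. Qed.
Lemma plen_cat p s1 s2 :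
  plen d p (s1 ++ s2) = plen d p s1 + plen d (last p s1) s2.
Proof.
elim: s1 p => [|x s1 IH] p /=; first by rewrite plen_nil add0r.
by rewrite !plen_cons IH addrA.
Qed.
Lemma plen_ge0 p s : 0 <= plen d p s.
Proof.
elim: s p => [|x s IH] p; first by rewrite plen_nil.
rewrite plen_cons; apply: addr_ge0 => //; exact: dge0.
Qed.
Lemma plen_nth x0 p s : plen d p s =
  \sum_(0 <= j < size s) d (nth x0 (p::s) j) (nth x0 (p::s) j.+1).
Proof.
elim: s p => [|x s IH] p; first by rewrite plen_nil big_geq.
rewrite plen_cons IH /= big_nat_recl //.
Qed.

Lemma card2_neq (x y : S) : #|[set x; y]| = 2%N -> x != y.
Proof. by rewrite cards2; case: (x != y). Qed.

Lemma shorter_in (E : {set {set S}}) p t : is_edge_set E -> is_walk E p t ->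
  p \in t -> exists s2, [/\ is_walk E p s2, last p s2 = last p t &
                          plen d p s2 < plen d p t].
Proof.
move=> HE Hw Hin; move: Hw; case/splitPr: Hin => s1 s2 Hw; exists s2.
move: Hw; rewrite /is_walk cat_path /= => /andP [Hw1 /andP [He Hw2]].
split => //; first by rewrite last_cat.
rewrite plen_cat plen_cons.
case: s1 Hw1 He => [|y s1] /=.
  by move=> _ /HE; rewrite setUid cards1.
move=> /andP [/HE /card2_neq hpy _] _.
rewrite plen_cons.
have := @dpos p y hpy; have := plen_ge0 y s1; have := plen_ge0 p s2;
have := dge0 (last y s1) p; lra.
Qed.

Lemma shorter (E : {set {set S}}) p s : is_edge_set E -> is_walk E p s ->
  ~~ uniq (p :: s) -> exists s2, [/\ is_walk E p s2, last p s2 = last p s &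
                          plen d p s2 < plen d p s].
Proof.
move=> HE; elim: s p => [|x s IH] p Hw; first by [].
rewrite cons_uniq negb_and negbK => /orP [Hin|Hu].
  exact: shorter_in HE Hw Hin.
move: Hw; rewrite /is_walk /= => /andP [He Hw].
have [s2 [Hw2 Hl Hlt]] := IH x Hw Hu.
exists (x :: s2); split => //=; first by rewrite He.
by rewrite !plen_cons ltrD2l.
Qed.

Lemma take_sorted_bound (T : eqType) (g : T -> R) (B : R) (s W : seq T) m :
  sorted (fun x y => g x <= g y) s -> uniq W -> {subset W <= s} ->
  (forall x, x \in W -> g x <= B) -> (m <= size W)%N ->
  forall x, x \in take m s -> g x <= B.
Proof.
move=> Hs HuW HWs HWB Hm x /(nthP x) [j]; rewrite size_take => Hj.
have Hjm : (j < m)%N by move: Hj; case: (ltnP m (size s)) => h1 h2; lia.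
have Hjs : (j < size s)%N by move: Hj; case: (ltnP m (size s)) => h1 h2; lia.
rewrite nth_take // => <-.
rewrite leNgt; apply/negP => Hgt.
have Hsub : {subset W <= take j s}.
  move=> y Hy; have /(nthP x) [j' Hj' Hy'] := HWs y Hy.
  case: (leqP j j') => Hjj.
    have := sorted_leq_nth (leT := fun x y => g x <= g y) (fun a b c h1 h2 => le_trans h1 h2) 
             (fun x => lexx (g x)) x Hs.
    move=> /(_ j j' Hjs Hj' Hjj) /=; rewrite Hy' => h.
    have := HWB y Hy; move: Hgt h; set a := g _; lra.
  rewrite -Hy' -(nth_take x Hjj); apply: mem_nth; rewrite size_take.
  case: (ltnP _ (size s)) => h1; lia.
have := uniq_leq_size HuW Hsub; rewrite size_take; case: (ltnP _ (size s)) => h1; lia.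
Qed.

Lemma cnt_le (L k j : nat) :
  (\sum_(0 <= i < k) ((i <= j + L) && (j <= i + L) : nat) <= L.*2.+1)%N.
Proof.
suff : (\sum_(0 <= i < k) ((i <= j + L) && (j <= i + L) : nat)
         <= minn k (j + L + 1) - (j - L))%N by lia.
elim: k => [|k IH]; first by rewrite big_geq.
rewrite big_nat_recr //=; case: ((k <= j + L)%N && (j <= k + L)%N) /andP => [[h1 h2]|h];
 lia.
Qed.

Lemma sum_eq1 (F : nat -> R) (k m : nat) : (m < k)%N ->
  \sum_(0 <= j < k) (if j == m then F j else 0) = F m.
Proof.
elim: k => [|k IH] //= Hm; rewrite big_nat_recr //=.
case: (ltnP m k) => Hmk.
  by rewrite IH // ifN ?addr0 //; rewrite neq_ltn Hmk orbT.
have -> : k = m by lia.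
rewrite eqxx big1_seq ?add0r // => i /andP [_]; rewrite mem_index_iota => /andP [_ h].
by rewrite ifN // neq_ltn h.
Qed.

End H.

Lemma bad_bound (S' : finType) (F : {set {set S'}}) f (x y : S') (Cs : seq S') :
  max_deg_le F f -> x != y -> [set x; y] \in F ->
  (forall c, c \in Cs -> c != x /\ c != y) ->
  (#|[set c in Cs | [set x; c] \in F]| <= f - 1)%N.
Proof.
move=> Hdeg hxy HF HCs.
set B := [set c in Cs | [set x; c] \in F].
have inj : {in B &, injective (fun c => [set x; c])}.
  move=> c c'; rewrite !inE => /andP [hc _] _ h.
  have : c \in [set x; c'] by rewrite -h set22.
  rewrite in_set2 => /orP [/eqP hcx|/eqP //].
  by have [] := HCs c hc; rewrite hcx eqxx.
rewrite -(card_in_imset inj).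
have sub : (fun c => [set x; c]) @: B \subset ([set e in F | x \in e] :\ [set x; y]).
  apply/subsetP => z /imsetP [c Hc ->]; move: Hc; rewrite !inE => /andP [hc hF].
  rewrite hF eqxx /= andbT; apply/negP => /eqP h.
  have : y \in [set x; c] by rewrite h set22.
  rewrite in_set2 => /orP [/eqP hyx|/eqP hyc].
    by rewrite hyx eqxx in hxy.
  by have [_] := HCs c hc; rewrite hyc eqxx.
have h1 := subset_leq_card sub.
have := cardsD1 [set x; y] [set e in F | x \in e].
rewrite inE HF set21 /= => h2.
have := Hdeg x => h3; apply: leq_trans h1 _; rewrite h2 in h3; move: h3; set u := #|_ : _|; move=> h3; rewrite -/u; lia.
Qed.

Theorem lemma5 (R : realFieldType) (S : finType) (d : S -> S -> R)
  (t : R) (E' : {set {set S}}) (f : nat) (ord : {set S} -> seq S)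
  (F : {set {set S}}) (p q : S) (s' : seq S) :
  is_metric d ->
  1 <= t ->
  is_edge_set E' ->
  is_spanner d E' t ->
  (1 <= f)%N -> (2 * f + 1 <= #|S|)%N ->
  (forall e, e \in E' -> valid_order d e (ord e)) ->
  F \subset construct ord f E' ->
  max_deg_le F f ->
  p != q ->
  is_shortest_path d E' p q s' ->
  (2 * f + 2 <= size (p :: s'))%N ->
  exists s, [/\ is_walk (construct ord f E' :\: F) p s, last p s = q &
                plen d p s <= (8 * f + 2)%:R * plen d p s'].
Proof.
move=> Hm Ht HE' Hsp Hf HS Hord HF Hdeg Hpq [Hw' Hl' Hsh] Hsize.
have Hk : (2 * f + 1 <= size s')%N by move: Hsize => /=; lia.
pose G := construct ord f E' :\: F.
pose k := size s'.
pose v := fun m => nth p (p :: s') m.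
pose e := fun j => d (v j) (v j.+1).
pose B := fun i => \sum_(0 <= j < k)
   (if (i <= j + 2 * f)%N && (j <= i + 2 * f)%N then e j else 0).
have Hlen : plen d p s' = \sum_(0 <= j < k) e j by rewrite (plen_nth (d:=d) p).
have Hu : uniq (p :: s').
  apply/negPn/negP => Hnu.
  have [s2 [Hw2 Hl2 Hlt]] := @shorter _ _ d Hm E' p s' HE' Hw' Hnu.
  have := Hsh s2 Hw2 (etrans Hl2 Hl'); lra.
have Hinj : forall m m', (m <= k)%N -> (m' <= k)%N -> v m = v m' -> m = m'.
  move=> m m' hm hm' h.
  have h1 : (m < size (p :: s'))%N by rewrite /= ltnS.
  have h2 : (m' < size (p :: s'))%N by rewrite /= ltnS.
  by move: (nth_uniq p h1 h2 Hu); rewrite /v /= in h; rewrite h eqxx => /esym/eqP.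
have Hedge : forall i, (i < k)%N -> [set v i; v i.+1] \in E'.
  move=> i hi; move/(pathP p): Hw' => /(_ i hi); by [].
have Hsge0 : forall (P : nat -> bool),
    0 <= \sum_(0 <= j < k) (if P j then e j else 0).
  move=> P; apply: sumr_ge0 => j _; case: (P j) => //; exact: (dge0 Hm).
have Hdseg : forall m m', (m <= m')%N -> (m' <= k)%N ->
    d (v m) (v m') <= \sum_(0 <= j < k) (if (m <= j)%N && (j < m')%N then e j else 0).
  move=> m m'; elim: m' => [|m' IH] hmm' hk.
    have -> : m = 0%N by lia.
    rewrite (d0 Hm); exact: (Hsge0 (fun j => (0 <= j)%N && (j < 0)%N)).
  case: (eqVneq m m'.+1) => hmeq.
    rewrite hmeq (d0 Hm); exact: (Hsge0 (fun j => (m'.+1 <= j)%N && (j < m'.+1)%N)).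
  have hle : (m <= m')%N by lia.
  have IH' := IH hle (ltnW hk).
  have -> : \sum_(0 <= j < k) (if (m <= j)%N && (j < m'.+1)%N then e j else 0) =
     \sum_(0 <= j < k) (if (m <= j)%N && (j < m')%N then e j else 0) +
     \sum_(0 <= j < k) (if j == m' then e j else 0).
    rewrite -big_split /=; apply: eq_bigr => j _.
    have [hj|hj|->] := ltngtP j m'.
    - by rewrite ltnS (ltnW hj) andbT addr0.
    - by rewrite ltnS (leqNgt j m') hj andbF addr0.
    - by rewrite hle ltnSn andbF add0r.
  rewrite sum_eq1 //.
  have := dtri Hm (v m) (v m') (v m'.+1); rewrite /e in IH' *; lra.
have Hwin : forall i m m', (i < k)%N ->
    (i <= m + 2 * f)%N -> (m <= i + 2 * f + 1)%N -> (m <= k)%N ->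
    (i <= m' + 2 * f)%N -> (m' <= i + 2 * f + 1)%N -> (m' <= k)%N ->
    d (v m) (v m') <= B i.
  move=> i m m' hi h1 h2 h3 h1' h2' h3'.
  wlog hle : m m' h1 h2 h3 h1' h2' h3' / (m <= m')%N.
    move=> W; case: (leqP m m') => h; first exact: W.
    rewrite (dsym Hm); apply: W => //; exact: ltnW.
  apply: le_trans (Hdseg _ _ hle h3') _; apply: ler_sum => j _.
  case: ifP => hj; last by case: (_ && _); [exact: (dge0 Hm)|].
  rewrite ifT //; apply/andP; move/andP: hj => [hj1 hj2]; split; lia.
have HB0 : forall i, 0 <= B i by move=> i; exact: Hsge0.
have Hstep : forall i, (i < k)%N -> exists w, [/\ is_walk G (v i) w,
     last (v i) w = v i.+1 & plen d (v i) w <= B i + B i].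
  move=> i hi; have HeE := Hedge i hi.
  have Hei : e i <= B i by rewrite /e; apply: Hwin; lia.
  have HB0i := HB0 i.
  case: (boolP ([set v i; v i.+1] \in F)) => HinF; last first.
    exists [:: v i.+1]; split => //.
      by rewrite /is_walk /= andbT /G in_setD HinF /= /construct in_setU HeE.
    rewrite plen_cons plen_nil addr0; rewrite /e in Hei; lra.
  pose a := v i; pose b := v i.+1; pose e0 := [set a; b].
  have hab : a != b by apply: card2_neq; exact: HE' _ HeE.
  have [Hperm Hsort] := Hord e0 HeE a b hab erefl.
  pose g := fun x => d a x + d x b.
  pose Wl := [seq v m | m <- iota (i - 2 * f) (i - (i - 2 * f))
                             ++ iota i.+2 (minn k (i + 1 + 2 * f) - i.+1)].
  have HWl : forall x, x \in Wl -> exists m, [/\ x = v m, (i <= m + 2 * f)%N,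
       (m <= i + 2 * f + 1)%N, (m <= k)%N & (m != i) && (m != i.+1)].
    move=> x /mapP [m] /(@win_idx i m f k hi) [h1 h2 h3 h4 h5] ->; exists m.
    by split => //; rewrite h4 h5.
  have Hvne : forall m, (m <= k)%N -> (m != i) && (m != i.+1) -> v m \in ~: e0.
    move=> m hm /andP [h1 h2]; rewrite in_setC /e0 in_set2 negb_or.
    apply/andP; split; apply/eqP => h.
      by move: (Hinj _ _ hm (ltnW hi) h) h1 => ->; rewrite eqxx.
    by move: (Hinj _ _ hm hi h) h2 => ->; rewrite eqxx.
  have HuWl : uniq Wl.
    rewrite map_inj_in_uniq.
      by rewrite cat_uniq !iota_uniq win_disj.
    move=> x y /(@win_idx i x f k hi) [_ _ hx _ _] /(@win_idx i y f k hi) [_ _ hy _ _].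
    exact: Hinj.
  have HWs : {subset Wl <= ord e0}.
    move=> x /HWl [m [-> h1 h2 h3 h4]]; rewrite (perm_mem Hperm) mem_enum.
    exact: Hvne.
  have HWB : forall x, x \in Wl -> g x <= B i + B i.
    move=> x /HWl [m [-> h1 h2 h3 h4]]; rewrite /g.
    have := Hwin i i m hi (leq_addr _ _) (leq_trans (leq_addr _ _) (leq_addr _ _))
       (ltnW hi) h1 h2 h3.
    have hsi : (i.+1 <= i + 2 * f + 1)%N by rewrite addn1 ltnS leq_addr.
    have := Hwin i m i.+1 hi h1 h2 h3 (leq_trans (leqnSn i) (leq_addr _ _)) hsi hi.
    rewrite /a /b; lra.
  have HsW : (2 * f - 1 <= size Wl)%N.
    by rewrite size_map size_cat !size_iota; apply: win_size.
  have Hcs : forall c, c \in Cset ord f e0 -> g c <= B i + B i.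
    exact: (@take_sorted_bound _ _ g _ _ _ _ Hsort HuWl HWs HWB HsW).
  pose Cs := Cset ord f e0.
  have Huo : uniq (ord e0) by rewrite (perm_uniq Hperm) enum_uniq.
  have HuCs : uniq Cs by apply: take_uniq.
  have HszCs : size Cs = (2 * f - 1)%N.
    rewrite /Cs /Cset size_takel // (perm_size Hperm) -cardE.
    have := cardsC e0; rewrite /e0 cards2 hab /= => h; exact: ar1 h HS.
  have HCsne : forall c, c \in Cs -> c != a /\ c != b.
    move=> c /mem_take; rewrite (perm_mem Hperm) mem_enum in_setC in_set2 negb_or.
    by case/andP.
  have Hbad1 := @bad_bound _ _ _ _ _ _ Hdeg hab HinF HCsne.
  have Hbad2 : (#|[set c in Cs | [set b; c] \in F]| <= f - 1)%N.
    apply: (@bad_bound _ _ _ _ a _ Hdeg); first by rewrite eq_sym.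
      by rewrite setUC.
    by move=> c /HCsne [].
  have [c Hc] : exists c, c \in [set c in Cs] :\:
      ([set c in Cs | [set a; c] \in F] :|: [set c in Cs | [set b; c] \in F]).
    apply/set0Pn; rewrite -card_gt0 cardsD.
    have h1 := subset_leq_card (subsetIr [set c in Cs]
      ([set c in Cs | [set a; c] \in F] :|: [set c in Cs | [set b; c] \in F])).
    have h2 := cardsU [set c in Cs | [set a; c] \in F] [set c in Cs | [set b; c] \in F].
    have h3 : #|[set c in Cs]| = (2 * f - 1)%N by rewrite cardsE (card_uniqP HuCs).
    rewrite h3; apply: leq_trans (@ar2 _ _ _ f (erefl (2*f-1)%N) Hf Hbad1 Hbad2) _.
    apply: leq_sub2l; apply: leq_trans h1 _; rewrite h2; exact: leq_subr.
  move: Hc; rewrite !inE negb_or => /andP [/andP [hA hB] hc].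
  rewrite hc /= in hA hB.
  exists [:: c; b]; split => //.
    rewrite /is_walk /= andbT; apply/andP; split.
      rewrite /G in_setD -/a hA /= /construct in_setU; apply/orP; right.
      apply/bigcupP; exists e0 => //; apply/imset2P.
      apply: (@Imset2spec _ _ _ _ _ _ _ a c) => //.
      by rewrite /e0 set21.
    rewrite (setUC [set c]) /G in_setD -/b hB /= /construct in_setU; apply/orP; right.
    apply/bigcupP; exists e0 => //; apply/imset2P.
    apply: (@Imset2spec _ _ _ _ _ _ _ b c) => //.
    by rewrite /e0 set22.
  rewrite !plen_cons plen_nil addr0; exact: Hcs.
have Hind : forall j, (j <= k)%N -> exists w, [/\ is_walk G p w,
    last p w = v j & plen d p w <= \sum_(0 <= i < j) (B i + B i)].
  elim => [|j IH] hj.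
    by exists [::]; split => //; rewrite plen_nil big_geq.
  have [w [hw hl hp]] := IH (ltnW hj).
  have [w2 [hw2 hl2 hp2]] := Hstep j hj.
  exists (w ++ w2); split.
  - by move: hw hw2; rewrite /is_walk cat_path hl => -> ->.
  - by rewrite last_cat hl.
  - rewrite plen_cat hl big_nat_recr //=; lra.
have [w [hw hl hp]] := Hind k (leqnn k).
exists w; split => //.
  rewrite hl -Hl'; exact: nth_last p (p :: s').
apply: le_trans hp _; rewrite Hlen.
have -> : \sum_(0 <= i < k) (B i + B i) = (\sum_(0 <= i < k) B i) *+ 2.
  by rewrite big_split /= mulr2n.
have -> : \sum_(0 <= i < k) B i = \sum_(0 <= j < k) e j *+
    \sum_(0 <= i < k) ((i <= j + 2 * f) && (j <= i + 2 * f) : nat).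
  rewrite /B exchange_big_nat /=; apply: eq_bigr => j _; rewrite -sumrMnr.
  by apply: eq_bigr => i _; case: (_ && _); rewrite ?mulr1n ?mulr0n.
apply: le_trans (_ : (\sum_(0 <= j < k) e j *+ (2 * f).*2.+1) *+ 2 <= _).
  rewrite ler_wMn2r //; apply: ler_sum => j _; apply: ler_wpMn2l.
    exact: dge0.
  exact: cnt_le.
rewrite sumrMnl -mulrnA -mulr_natl.
have -> : ((2 * f).*2.+1 * 2 = 8 * f + 2)%N by lia.
by rewrite mulr1 mulr_natl.
Qed.
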